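(* Let $G=(V,E)$ be a connected graph, let $T$ be a spanning tree of $G$ rooted in $s$ which is an $\mathcal L$-tree of LexDFS on $G$, and let $\sigma$ be a vertex order of $G$ starting at $s$ whose $\mathcal L$-tree is $T$. Then Ordering$(G,T,s,\sigma^-)$ outputs $\sigma$ if and only if $\sigma$ is a LexDFS order of $G$.
   Context: Graphs are finite, simple, undirected; $N(v)$ is the neighborhood of $v$. A vertex order is a linear order $\sigma=(v_1,\dots,v_n)$ of $V$; $\sigma(i)=v_i$; $u\prec_\sigma v$ means $u$ appears before $v$; $\sigma^-$ is the reverse order. DFS: a search that starts at a vertex and repeatedly visits an unvisited neighbor of the most recently visited vertex that still has an unvisited neighbor. DFS$^+(\tau)$ on a graph $H$: the DFS of $H$ starting at the last vertex of $\tau$ that, whenever several vertices may be visited next, visits the one rightmost in $\tau$. LexDFS started at $s$: label $s$ with $(0)$, all others with the empty label; for $i=1,\dots,n$ pick an unnumbered vertex $v$ with lexicographically largest label, set $\sigma(i)=v$, prepend $i$ to the label of each unnumbered neighbor of $v$; a LexDFS order is any possible output. $\mathcal L$-tree of a vertex order $(v_1,\dots,v_n)$: the spanning tree rooted at $v_1$ with an edge from each $v_i$ ($i>1$) to its rightmost neighbor $v_j$ with $j<i$; a rooted spanning tree $T$ (root $s$) is an $\mathcal L$-tree of LexDFS on $G$ if some LexDFS order of $G$ starting at $s$ has $\mathcal L$-tree $T$. Refining an ordered partition $(Q_1,\dots,Q_k)$ of $V$ with $S'$ replaces each $Q_i$ by $(Q_i\cap S',Q_i\setminus S')$ whenever both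 are nonempty. Procedure Ordering$(G,T,s,\rho)$ (for $\rho$ ending with $s$): let $\beta$ be the reverse of a BFS order of $T$ starting at $s$; $\mathcal Q=(V)$; for $i=1,\dots,n$, with $v=\beta(i)$, refine $\mathcal Q$ with $\{w\in N(v): w\prec_\beta v\}$; order the vertices inside each class of $\mathcal Q$ according to $\rho^-$ and move $\{s\}$ to the leftmost position; let $\tau$ be the reverse of the resulting order of all vertices; output DFS$^+(\tau)$ on $T$. *)

(* Defs.v *)
From mathcomp Require Import all_boot.
Set Implicit Arguments. Unset Strict Implicit. Unset Printing Implicit Defensive.

Section Defs.
Variable V : finType.

Definition simple_graph (e : rel V) : Prop := symmetric e /\ irreflexive e.

Definition connected_graph (e : rel V) : Prop := forall x y : V, connect e x y.

Definition vertex_order (s : seq V) : bool := uniq s && all (mem s) (enum V).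

Fixpoint lex_le (a b : seq nat) : bool :=
  match a, b with
  | [::], _ => true
  | _ :: _, [::] => false
  | x :: a', y :: b' => (x < y) || ((x == y) && lex_le a' b')
  end.

(* LexDFS label of w just before step i+1 (0-indexed: before the (i)-th
   vertex of sigma is numbered): the numbers j+1 of the already numbered
   neighbours sigma(j), most recent first, followed by the initial label
   (0) if w = s. *)
Definition lexdfs_label (e : rel V) (s : V) (sigma : seq V) (i : nat) (w : V)
  : seq nat :=
  rev [seq j.+1 | j <- iota 0 i & e (nth s sigma j) w]
  ++ (if w == s then [:: 0] else [::]).

Definition lexdfs_order (e : rel V) (s : V) (sigma : seq V) : Prop :=
  vertex_order sigma /\
  forall i, i < size sigma ->
    forall w, w \in drop i sigma ->
      lex_le (lexdfs_label e s sigma i w) (lexdfs_label e s sigma i (nth s sigma i)).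

(* L-tree of a vertex order sigma: each non-first vertex is joined to its
   rightmost earlier neighbour. *)
Definition earlier_nbrs (e : rel V) (sigma : seq V) (v : V) : seq V :=
  [seq u <- take (index v sigma) sigma | e u v].

Definition lparent (e : rel V) (sigma : seq V) (v p : V) : bool :=
  (earlier_nbrs e sigma v != [::]) && (p == last p (earlier_nbrs e sigma v)).

Definition ltree_rel (e : rel V) (sigma : seq V) : rel V :=
  fun x y => lparent e sigma y x || lparent e sigma x y.

Definition ltree_of (e : rel V) (sigma : seq V) (t : rel V) : Prop :=
  (forall v, v \in behead sigma -> earlier_nbrs e sigma v != [::]) /\
  (forall x y, t x y = ltree_rel e sigma x y).

Definition is_lexdfs_ltree (e : rel V) (t : rel V) (s : V) : Prop :=
  exists tau, lexdfs_order e s tau /\ ltree_of e tau t.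

(* beta is a BFS order of the graph h starting at s: each next vertex is a
   neighbour of the earliest visited vertex that still has an unvisited
   neighbour. *)
Definition bfs_order (h : rel V) (s : V) (beta : seq V) : Prop :=
  [/\ vertex_order beta, head s beta = s &
   forall i, 0 < i < size beta ->
     let vis := take i beta in
     let j := find (fun u => has (fun w => h u w && (w \notin vis)) (enum V)) vis in
     j < i /\ h (nth s beta j) (nth s beta i)].

(* pi = DFS^+(tau) on h: starts at the last vertex of tau; the next vertex is
   the rightmost (in tau) unvisited neighbour of the most recently visited
   vertex that still has an unvisited neighbour. *)
Definition dfs_plus (h : rel V) (tau pi : seq V) : Prop :=
  exists x0 : V,
  [/\ vertex_order pi, head x0 pi = last x0 tau &
   forall i, 0 < i < size pi ->
     let vis := take i pi in
     let unv := fun u w => h u w && (w \notin vis) in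
     exists2 j, j < i &
       [/\ has (unv (nth x0 pi j)) (enum V),
           forall k, j < k < i -> ~~ has (unv (nth x0 pi k)) (enum V),
           unv (nth x0 pi j) (nth x0 pi i) &
           forall w, unv (nth x0 pi j) w -> index w tau <= index (nth x0 pi i) tau]].

Definition refine (Q : seq (seq V)) (S : pred V) : seq (seq V) :=
  flatten [seq if has S q && has (predC S) q then [:: filter S q; filter (predC S) q]
               else [:: q] | q <- Q].

(* the partition computed by Ordering, with beta the reverse of a BFS order
   of the tree *)
Definition ordering_partition (e : rel V) (beta : seq V) : seq (seq V) :=
  foldl (fun Q v => refine Q [pred w | e v w & index w beta < index v beta])
        [:: enum V] beta.

Definition ordering_tau (e : rel V) (s : V) (rho bfs : seq V) : seq V :=
  let beta := rev bfs in
  let Q := ordering_partition e beta in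
  let ord_in := fun x y => index x (rev rho) <= index y (rev rho) in
  let L := flatten [seq sort ord_in q | q <- Q] in
  rev (s :: rem s L).

Definition ordering_outputs (e t : rel V) (s : V) (rho bfs pi : seq V) : Prop :=
  dfs_plus t (ordering_tau e s rho bfs) pi.

End Defs.

(* Main.v *)
Require Import Defs.
From mathcomp Require Import all_boot zify.
Set Implicit Arguments. Unset Strict Implicit. Unset Printing Implicit Defensive.

Lemma lex_le_refl a : lex_le a a.
Proof. by elim: a => //= x a ->; rewrite eqxx ltnn orbT. Qed.

Lemma lex_le_trans a b c : lex_le a b -> lex_le b c -> lex_le a c.
Proof.
elim: a b c => [|x a IH] [|y b] [|z c] //=.
case/orP=> [xy|/andP[/eqP-> ab]]; case/orP=> [yz|/andP[/eqP<- bc]].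
- by rewrite (ltn_trans xy yz).
- by rewrite xy.
- by rewrite yz.
- by rewrite eqxx (IH _ _ ab bc) orbT.
Qed.

Definition labl (P : pred nat) i := rev [seq j.+1 | j <- iota 0 i & P j].

Definition witn (P Q : pred nat) i :=
  exists k, [/\ k < i, P k, ~~ Q k & forall l, k < l < i -> P l = Q l].

Lemma labl_bound P i : all (fun x => x <= i) (labl P i).
Proof.
rewrite /labl all_rev; apply/allP=> x /mapP[j]; rewrite mem_filter mem_iota.
by case/andP=> _ /andP[_ ji] ->.
Qed.

Lemma lablS P i : labl P i.+1 = if P i then i.+1 :: labl P i else labl P i.
Proof.
rewrite /labl -{1}addn1 iotaD filter_cat map_cat rev_cat /= add0n.
by case: (P i).
Qed.

Lemma witnS P Q i : witn P Q i.+1 <-> (P i && ~~ Q i) \/ (P i = Q i /\ witn P Q i).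
Proof.
split.
  case=> k [ki Pk Qk Hl].
  have [ei|ne] := eqVneq k i; first by left; rewrite -ei Pk Qk.
  right; have ki' : k < i by lia.
  split; first by apply: Hl; lia.
  by exists k; split=> // l kl; apply: Hl; lia.
case=> [/andP[Pi Qi]|[Ei [k [ki Pk Qk Hl]]]].
  by exists i; split=> // l; lia.
exists k; split=> //; first lia.
move=> l /andP[kl li]; have [->//|ne] := eqVneq l i.
by apply: Hl; rewrite kl /=; lia.
Qed.

Lemma lex_head_big x a b : all (fun y => y <= x) b -> lex_le (x.+1 :: a) b = false.
Proof.
case: b => //= y b /andP[yx _].
have ->: (x.+1 < y) = false by lia.
by have ->: (x.+1 == y) = false by lia.
Qed.

Lemma lex_labl P Q i : lex_le (labl P i) (labl Q i) <-> ~ witn P Q i.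
Proof.
elim: i => [|i IH].
  by split=> // _ [k [] ].
have bQ := labl_bound Q i; have bP := labl_bound P i.
rewrite witnS !lablS; case PE: (P i); case QE: (Q i).
- rewrite /= ltnn eqxx /= IH; split=> H; last by move=> W; apply: H; right.
  by case=> // [[_ W]]; apply: H.
- rewrite lex_head_big //; split=> // H; exfalso; apply: H; by left.
- split=> [_ [//|[]//]|_].
  case: (labl P i) bP => //= y a /andP[yi _]; by rewrite ltnS yi.
- rewrite IH; split=> H; last by move=> W; apply: H; right.
  by case=> // [[_ W]]; apply: H.
Qed.

Lemma pairwise_index (T : eqType) (r : rel T) (l : seq T) x y :
  pairwise r l -> x \in l -> y \in l -> index x l < index y l -> r x y.
Proof.
elim: l => //= z l IH /andP[/allP Hz Hl]; rewrite !inE.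
case: (eqVneq z x) => [<-|zx]; case: (eqVneq z y) => [<-|zy] //=.
- by move=> _ yl _; apply: Hz.
- by rewrite ltnS; apply: IH.
Qed.

Lemma pairwise_rev (T : Type) (r : rel T) (l : seq T) :
  pairwise r (rev l) = pairwise (fun x y => r y x) l.
Proof.
elim: l => //= x l IH; rewrite rev_cons -cats1 pairwise_cat IH /= andbT.
by rewrite allrel1r all_rev andbC.
Qed.

Lemma last_filter_nth (T : eqType) (P : pred T) (l : seq T) x0 m :
  m < size l -> P (nth x0 l m) ->
  (forall k, m < k < size l -> ~~ P (nth x0 l k)) ->
  last x0 (filter P l) = nth x0 l m.
Proof.
move=> ml Pm Hk.
rewrite -(cat_take_drop m l) (drop_nth x0 ml) filter_cat /= Pm.
have -> : filter P (drop m.+1 l) = [::].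
  apply/eqP; rewrite -(negbK (_ == _)) -has_filter; apply/hasPn => y.
  move/(nthP x0) => [k]; rewrite size_drop nth_drop => kl <-.
  by apply: Hk; lia.
rewrite last_cat /= nth_cat size_take ml ltnn subnn /=; by [].
Qed.

Lemma last_witness (P : pred nat) i :
  (exists j, j < i /\ P j) -> exists j, [/\ j < i, P j & forall k, j < k < i -> ~~ P k].
Proof.
elim: i => [[j []]//|i IH H].
case Pi: (P i); first by exists i; split=> // k; lia.
have [j [ji Pj]] := H; have ji' : j < i by case: (j =P i) Pi Pj => [->->//|]; lia.
have [j' [j'i Pj' Hk]] := IH (ex_intro _ j (conj ji' Pj)).
exists j'; split=> //; first lia.
move=> k /andP[a b]; have [->|ne] := eqVneq k i; first by rewrite Pi.
by apply: Hk; lia.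
Qed.

Lemma first_cross (P : pred nat) K : ~~ P 0 -> P K -> exists k, [/\ k < K, ~~ P k & P k.+1].
Proof.
elim: K => [/negbTE->//|K IH P0 PK].
case PKb: (P K); last by exists K; rewrite PKb.
by have [k [kK a b]] := IH P0 PKb; exists k; split=> //; lia.
Qed.

Section Sig.
Variable V : finType.
Implicit Types (Ss : seq (pred V)) (x y z : V).

Fixpoint ltsig Ss x y : bool :=
  match Ss with
  | [::] => false
  | SS :: Ss' => (SS x && ~~ SS y) || ((SS x == SS y) && ltsig Ss' x y)
  end.

Definition eqsig Ss x y := all (fun SS : pred V => SS x == SS y) Ss.

Lemma ltsig_rcons Ss SS x y :
  ltsig (rcons Ss SS) x y = ltsig Ss x y || (eqsig Ss x y && SS x && ~~ SS y).
Proof.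
elim: Ss => [|T Ss IH] /=; first by rewrite /eqsig /= andbF orbF.
rewrite IH /eqsig /=; case: (T x) (T y) => [] [] //=; by rewrite ?orbF ?andbF.
Qed.

Lemma eqsig_rcons Ss SS x y : eqsig (rcons Ss SS) x y = eqsig Ss x y && (SS x == SS y).
Proof. by rewrite /eqsig all_rcons andbC. Qed.

Lemma ltsig_trich Ss x y : [|| ltsig Ss x y, eqsig Ss x y | ltsig Ss y x].
Proof.
elim: Ss => //= SS Ss IH; case: (SS x) (SS y) => [] [] //=.
Qed.

Lemma ltsig_asym Ss x y : ltsig Ss x y -> ltsig Ss y x = false.
Proof. elim: Ss => //= SS Ss IH; case: (SS x) (SS y) => [] [] //=. Qed.

Lemma ltsig_eqsig Ss x y : ltsig Ss x y -> eqsig Ss x y = false.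
Proof. elim: Ss => //= SS Ss IH; case: (SS x) (SS y) => [] [] //=. Qed.

Lemma eqsig_sym Ss x y : eqsig Ss x y = eqsig Ss y x.
Proof. by apply: eq_all => SS; rewrite eq_sym. Qed.

Lemma ltsig_not Ss x y : (ltsig Ss y x || eqsig Ss y x) = ~~ ltsig Ss x y.
Proof.
case L: (ltsig Ss x y) => /=.
  by rewrite (ltsig_asym L) /= eqsig_sym (ltsig_eqsig L).
by have := ltsig_trich Ss y x; rewrite L orbF.
Qed.

Lemma ltsig_map (F : V -> pred V) (l : seq V) x y :
  ltsig (map F l) x y <->
  exists v, [/\ v \in l, F v x, ~~ F v y &
    forall v', v' \in l -> index v' l < index v l -> F v' x = F v' y].
Proof.
elim: l => [|a l IH] /=; first by split=> // [[v []]].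
split.
  case/orP=> [/andP[Fx Fy]|/andP[/eqP E /IH [v [vl Fvx Fvy H]]]].
    by exists a; rewrite inE eqxx; split=> // v'; rewrite /= eqxx.
  have va : v != a by apply/eqP => va; move: Fvy; rewrite va -E -va Fvx.
  exists v; split=> //; first by rewrite inE vl orbT.
  move=> v'; rewrite inE /= [a == v]eq_sym (negbTE va).
  case: (eqVneq a v') => [<- //|_] /= v'l; rewrite ltnS; exact: H.
case=> v [vl Fx Fy H].
case: (eqVneq a v) => [av|av]; first by rewrite av Fx Fy.
have E : F a x = F a y by apply: H; [rewrite inE eqxx | rewrite /= eqxx (negbTE av)].
apply/orP; right; rewrite E eqxx /=; apply/IH.
move: vl; rewrite inE eq_sym (negbTE av) /= => vl.
exists v; split=> // v' v'l; have := H v'; rewrite inE v'l orbT /= => H'.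
case: (eqVneq a v') => [<- //|av'] ilt; apply: H' => //.
by rewrite (negbTE av) (negbTE av') ltnS.
Qed.

Fixpoint good Ss (Q : seq (seq V)) : Prop :=
  match Q with
  | [::] => True
  | q :: Q' => [/\ {in q &, forall x y, eqsig Ss x y},
                   {in q, forall x, {in flatten Q', forall y, ltsig Ss x y}} &
                   good Ss Q']
  end.

Lemma refine_cons q Q (SS : pred V) :
  refine (q :: Q) SS =
  (if has SS q && has (predC SS) q then [:: filter SS q; filter (predC SS) q] else [:: q])
  ++ refine Q SS.
Proof. by []. Qed.

Lemma perm_refine Q (SS : pred V) : perm_eq (flatten (refine Q SS)) (flatten Q).
Proof.
elim: Q => //= q Q IH; rewrite refine_cons flatten_cat /=.
case: ifP => _ /=; rewrite ?cats0; apply: perm_cat => //; by rewrite perm_filterC.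
Qed.

Lemma good_refine Ss Q (SS : pred V) : good Ss Q -> good (rcons Ss SS) (refine Q SS).
Proof.
elim: Q => //= q Q IH [Hq Hx HQ]; rewrite refine_cons.
have memR : flatten (refine Q SS) =i flatten Q := perm_mem (perm_refine Q SS).
case: ifP => Hif /=.
  split; last split=> //.
  - move=> x y; rewrite !mem_filter => /andP[Sx xq] /andP[Sy yq].
    by rewrite eqsig_rcons Hq // Sx Sy.
  - move=> x; rewrite mem_filter => /andP[Sx xq] y; rewrite mem_cat mem_filter.
    case/orP=> [/andP[/= Sy yq]|].
      by rewrite ltsig_rcons Hq // Sx Sy orbT.
    by rewrite ?cats0 memR => yQ; rewrite ltsig_rcons Hx.
  - move=> x y; rewrite !mem_filter => /andP[Sx xq] /andP[Sy yq].
    by rewrite eqsig_rcons Hq //= (negbTE Sx) (negbTE Sy).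
  - move=> x; rewrite mem_filter => /andP[Sx xq] y; rewrite ?cats0 memR => yQ.
    by rewrite ltsig_rcons Hx.
  - exact: IH.
have Hh := negbT Hif; rewrite negb_and in Hh.
split; last exact: IH.
- move=> x y xq yq; rewrite eqsig_rcons Hq //=.
  case/orP: Hh => /hasPn H.
    by have := H x xq; have := H y yq => /negbTE-> /negbTE->.
  by have := H x xq; have := H y yq => /= /negbNE-> /negbNE->.
- by move=> x xq y; rewrite ?cats0 memR => yQ; rewrite ltsig_rcons Hx.
Qed.

Lemma good_fold Ss Q (Ts : seq (pred V)) :
  good Ss Q -> good (Ss ++ Ts) (foldl (fun Q SS => refine Q SS) Q Ts).
Proof.
elim: Ts Ss Q => [|T Ts IH] Ss Q H /=; first by rewrite cats0.
by rewrite -cat_rcons; apply: IH; apply: good_refine.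
Qed.

Lemma perm_fold Q (Ts : seq (pred V)) :
  perm_eq (flatten (foldl (fun Q SS => refine Q SS) Q Ts)) (flatten Q).
Proof.
elim: Ts Q => //= T Ts IH Q; exact: perm_trans (IH _) (perm_refine _ _).
Qed.

End Sig.

Lemma foldl_map' (T1 T2 R : Type) (f : R -> T2 -> R) (h : T1 -> T2) z (l : seq T1) :
  foldl f z (map h l) = foldl (fun z x => f z (h x)) z l.
Proof. by elim: l z => //= x l IH z. Qed.

Section Tau.
Variable V : finType.
Variables (e : rel V) (s : V) (rho bfs : seq V).
Hypothesis rho_all : forall v, v \in rho.

Let rk x := index x (rev rho).
Let ord_in := fun x y => rk x <= rk y.
Let beta := rev bfs.
Let SS v : pred V := [pred w | e v w & index w beta < index v beta].
Let Ss := map SS beta.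
Let Q := ordering_partition e beta.
Definition rS x y := ltsig Ss x y || (eqsig Ss x y && (rk x <= rk y)).

Lemma rk_inj x y : rk x = rk y -> x = y.
Proof.
move=> E; have hx : x \in rev rho by rewrite mem_rev.
have hy : y \in rev rho by rewrite mem_rev.
by rewrite -(nth_index x hx) -(nth_index x hy); congr nth.
Qed.

Lemma rS_antisym x y : rS x y -> rS y x -> x = y.
Proof.
rewrite /rS; case/orP=> [lt|/andP[eq le]].
  by rewrite (ltsig_asym lt) /= eqsig_sym (ltsig_eqsig lt).
case/orP=> [lt|/andP[_ le']]; first by rewrite eqsig_sym (ltsig_eqsig lt) in eq.
by apply: rk_inj; apply/eqP; rewrite eqn_leq le le'.
Qed.

Lemma Q_good : good Ss Q.
Proof.
rewrite /Q /ordering_partition.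
have -> : foldl (fun Q v => refine Q [pred w | e v w & index w beta < index v beta])
        [:: enum V] beta = foldl (fun Q S => refine Q S) [:: enum V] Ss.
  by rewrite /Ss foldl_map'.
by apply: (good_fold (Ss := [::])) => /=; split=> //.
Qed.

Lemma Q_perm : perm_eq (flatten Q) (enum V).
Proof.
rewrite /Q /ordering_partition.
have -> : foldl (fun Q v => refine Q [pred w | e v w & index w beta < index v beta])
        [:: enum V] beta = foldl (fun Q S => refine Q S) [:: enum V] Ss.
  by rewrite /Ss foldl_map'.
by have := perm_fold [:: enum V] Ss; rewrite /= cats0.
Qed.

Lemma perm_Lsort (Q' : seq (seq V)) :
  perm_eq (flatten [seq sort ord_in q | q <- Q']) (flatten Q').
Proof. elim: Q' => //= q Q' IH; apply: perm_cat => //; by rewrite perm_sort. Qed.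

Lemma pairwise_Lsort (Q' : seq (seq V)) : good Ss Q' ->
  pairwise rS (flatten [seq sort ord_in q | q <- Q']).
Proof.
elim: Q' => //= q Q' IH [Hq Hx HQ]; rewrite pairwise_cat IH // andbT.
apply/andP; split.
  apply/allrelP => x y; rewrite mem_sort (perm_mem (perm_Lsort Q')) => xq yQ.
  by rewrite /rS Hx.
have: pairwise ord_in (sort ord_in q).
  rewrite -sorted_pairwise; first by apply: sort_sorted => a b; exact: leq_total.
  by move=> a b c; exact: leq_trans.
apply: (@sub_in_pairwise _ (mem q)); last by apply/allP => x; rewrite mem_sort.
by move=> x y xq yq le; rewrite /rS Hq //; apply/orP; right; exact: le.
Qed.

Lemma tau_cmp x y : x != s -> y != s -> x != y ->
  (index x (ordering_tau e s rho bfs) <= index y (ordering_tau e s rho bfs)) = rS y x.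
Proof.
move=> xs ys xy.
rewrite /ordering_tau -/beta -/Q.
set L := flatten _.
have pL : perm_eq L (enum V) by apply: perm_trans (perm_Lsort Q) Q_perm.
have uL : uniq L by rewrite (perm_uniq pL) enum_uniq.
have mL z : z \in L by rewrite (perm_mem pL) mem_enum.
have pwL : pairwise rS L by apply: pairwise_Lsort; exact: Q_good.
set L2 := s :: rem s L.
have pw2 : pairwise (fun a b => (a == s) || rS a b) L2.
  rewrite /L2 /= eqxx; apply/andP; split; first by apply/allP.
  apply: sub_pairwise (subseq_pairwise (rem_subseq s L) pwL) => a b ->; exact: orbT.
have u2 : uniq L2 by rewrite /L2 /= rem_uniq // mem_rem_uniq // inE eqxx.
have m2 z : z \in L2 by rewrite /L2 inE mem_rem_uniq // inE mL; case: eqP.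
set tau := rev L2.
have pwt : pairwise (fun a b => (b == s) || rS b a) tau by rewrite pairwise_rev.
have mt z : z \in tau by rewrite mem_rev.
have ne : index x tau != index y tau.
  apply: contra xy => /eqP E; apply/eqP.
  by rewrite -(nth_index x (mt x)) E nth_index.
case: ltngtP ne => // H _.
  by have := pairwise_index pwt (mt x) (mt y) H; rewrite (negbTE ys).
have := pairwise_index pwt (mt y) (mt x) H; rewrite (negbTE xs) /= => r1.
apply/esym/negbTE; apply: contra xy => r2.
by rewrite (rS_antisym r1 r2).
Qed.

End Tau.

Section Ord.
Variables (V : finType) (e : rel V) (s : V) (rho : seq V).
Hypothesis vo : vertex_order rho.
Hypothesis hd : head s rho = s.

Lemma mem_rho v : v \in rho.
Proof. by case/andP: vo => _ /allP; apply; rewrite mem_enum. Qed.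

Lemma uniq_rho : uniq rho.
Proof. by case/andP: vo. Qed.

Lemma idx_lt v : index v rho < size rho.
Proof. by rewrite index_mem mem_rho. Qed.

Lemma nth_idx v : nth s rho (index v rho) = v.
Proof. by rewrite nth_index // mem_rho. Qed.

Lemma idx_nth k : k < size rho -> index (nth s rho k) rho = k.
Proof. by move=> ks; rewrite index_uniq // uniq_rho. Qed.

Lemma rho_cons : rho = s :: behead rho.
Proof. by case: rho hd (mem_rho s) => //= a l ->. Qed.

Lemma idx_s : index s rho = 0.
Proof. by rewrite rho_cons /= eqxx. Qed.

Lemma idx_eq0 v : index v rho = 0 -> v = s.
Proof. by move=> E; rewrite -(nth_idx v) E -idx_s nth_idx. Qed.

Lemma in_take_rho w i : (w \in take i rho) = (index w rho < i).
Proof. by rewrite in_take // mem_rho. Qed.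

Lemma in_drop_rho w i : (w \in drop i rho) = (i <= index w rho).
Proof.
have U := uniq_rho; rewrite -(cat_take_drop i rho) cat_uniq in U.
case/and3P: U => _ /hasPn H _.
have M := mem_rho w; rewrite -(cat_take_drop i rho) mem_cat in_take_rho in M.
case: ltnP M => /= h; last by [].
move=> _; have wt : w \in take i rho by rewrite in_take_rho.
apply/negbTE; apply: contraL wt => wd; exact: H.
Qed.

Definition par v := last v (earlier_nbrs e rho v).

Lemma earlier_s : earlier_nbrs e rho s = [::].
Proof. by rewrite /earlier_nbrs idx_s take0. Qed.

Lemma par_s : par s = s.
Proof. by rewrite /par earlier_s. Qed.

Lemma par_prop v : earlier_nbrs e rho v != [::] ->
  index (par v) rho < index v rho /\ e (par v) v.
Proof.
rewrite /par; case E: (earlier_nbrs e rho v) => [//|a l] _.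
have : last v (a :: l) \in earlier_nbrs e rho v by rewrite E /= mem_last.
by rewrite mem_filter in_take_rho => /andP[-> ->].
Qed.

Definition lab i w := lexdfs_label e s rho i w.

Lemma lab_labl i w : w != s -> lab i w = labl (fun j => e (nth s rho j) w) i.
Proof. by move=> ws; rewrite /lab /lexdfs_label (negbTE ws) cats0. Qed.

Lemma lex_step i m z :
  0 < i < size rho ->
  (forall w, w \in drop i rho -> lex_le (lab i w) (lab i (nth s rho i))) ->
  m < i -> e (nth s rho m) z -> i <= index z rho ->
  (forall l w, m < l < i -> i <= index w rho -> ~~ e (nth s rho l) w) ->
  e (nth s rho m) (nth s rho i) /\ par (nth s rho i) = nth s rho m.
Proof.
move=> /andP[i0 isz] L mi Emz zi Hl.
have zs : z != s by apply: contraTneq zi => ->; rewrite idx_s -ltnNge.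
have ci : index (nth s rho i) rho = i by rewrite idx_nth.
have cs : nth s rho i != s by apply: contraTneq i0 => E; rewrite -ci E idx_s.
have E1 : e (nth s rho m) (nth s rho i).
  apply/negPn/negP => NE.
  have := L z; rewrite in_drop_rho => /(_ zi).
  rewrite !lab_labl // lex_labl; apply; exists m; split=> //.
  move=> l li; rewrite (negbTE (Hl _ _ li zi)) (negbTE (Hl _ _ li _)) //.
  by rewrite ci.
split=> //.
rewrite /par /earlier_nbrs ci.
have mt : m < size (take i rho) by rewrite size_take isz.
have msz : m < size rho by apply: ltn_trans mi isz.
have nt k : k < i -> nth (nth s rho i) (take i rho) k = nth s rho k.
  by move=> ki; rewrite nth_take // (set_nth_default s) // (ltn_trans ki isz).
rewrite (last_filter_nth (x0 := nth s rho i) mt) ?nt //.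
move=> k /andP[mk]; rewrite size_take isz => ki; rewrite nt //.
apply: Hl; first by rewrite mk ki.
by rewrite ci.
Qed.

Lemma lparent_char (H : forall v, v \in behead rho -> earlier_nbrs e rho v != [::]) v q :
  lparent e rho v q = (v != s) && (q == par v).
Proof.
rewrite /lparent /par; case: (eqVneq v s) => [->|vs]; first by rewrite earlier_s.
have : v \in behead rho.
  by have := mem_rho v; rewrite rho_cons inE (negbTE vs).
move/H; case: (earlier_nbrs e rho v) => //= a l _.
Qed.

Lemma par_lt (H : forall v, v \in behead rho -> earlier_nbrs e rho v != [::]) v :
  v != s -> index (par v) rho < index v rho /\ e (par v) v.
Proof.
move=> vs; apply: par_prop; apply: H.
by have := mem_rho v; rewrite rho_cons inE (negbTE vs).
Qed.

End Ord.

Lemma index_rev_uniq (T : eqType) (l : seq T) x :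
  uniq l -> x \in l -> index x (rev l) = size l - (index x l).+1.
Proof.
move=> ul xl; have il : index x l < size l by rewrite index_mem.
have k_lt : size l - (index x l).+1 < size (rev l) by rewrite size_rev; lia.
rewrite -{1}(nth_index x xl).
have -> : nth x l (index x l) = nth x (rev l) (size l - (index x l).+1).
  rewrite nth_rev; last by rewrite size_rev in k_lt.
  congr nth; lia.
by rewrite index_uniq // rev_uniq.
Qed.

Lemma index_rev_lt (T : eqType) (l : seq T) x y :
  uniq l -> x \in l -> y \in l ->
  (index x (rev l) < index y (rev l)) = (index y l < index x l).
Proof.
move=> ul xl yl; rewrite !index_rev_uniq //.
have := index_mem x l; have := index_mem y l; rewrite xl yl; lia.
Qed.

Lemma path_cross (T : Type) (e : rel T) (P : pred T) x pth :
  P x -> ~~ P (last x pth) -> path e x pth -> exists u v, [/\ P u, ~~ P v & e u v].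
Proof.
elim: pth x => [|y pth IH] x /=; first by move=> ->.
move=> Px Pl /andP[exy pth'].
case Py: (P y); first exact: IH Py Pl pth'.
by exists x, y; rewrite Py.
Qed.

Section Main.
Variables (V : finType) (e t : rel V) (s : V) (sigma tau0 : seq V).
Hypothesis esym : symmetric e.
Hypothesis eirr : irreflexive e.
Hypothesis econn : connected_graph e.
Hypothesis voS : vertex_order sigma.
Hypothesis hdS : head s sigma = s.
Hypothesis ltS : ltree_of e sigma t.
Hypothesis lex0 : lexdfs_order e s tau0.
Hypothesis lt0 : ltree_of e tau0 t.

Lemma vo0 : vertex_order tau0.
Proof. by case: lex0. Qed.

Lemma hd0 : head s tau0 = s.
Proof.
case: lex0 => vo L.
have sz : 0 < size tau0 by rewrite -has_predT; apply/hasP; exists s => //; exact: mem_rho.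
have := L 0 sz s; rewrite drop0 (mem_rho vo) => /(_ isT).
rewrite /lexdfs_label /= eqxx /=.
case: tau0 sz => //= a l _; by case: eqP.
Qed.

Let p := par e sigma.
Let p0 := par e tau0.

Lemma t_charS x y : t x y = ((y != s) && (x == p y)) || ((x != s) && (y == p x)).
Proof. by case: ltS => H ->; rewrite /ltree_rel !(lparent_char voS hdS H). Qed.

Lemma t_char0 x y : t x y = ((y != s) && (x == p0 y)) || ((x != s) && (y == p0 x)).
Proof. by case: lt0 => H ->; rewrite /ltree_rel !(lparent_char vo0 hd0 H). Qed.

Lemma p_lt v : v != s -> index (p v) sigma < index v sigma /\ e (p v) v.
Proof. by case: ltS => H _; apply: (par_lt voS hdS H). Qed.

Lemma p0_lt v : v != s -> index (p0 v) tau0 < index v tau0 /\ e (p0 v) v.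
Proof. by case: lt0 => H _; apply: (par_lt vo0 hd0 H). Qed.

Lemma p_s : p s = s.
Proof. exact: (@par_s _ e _ _ voS hdS). Qed.

Lemma par_eq v : p0 v = p v.
Proof.
suff H : forall n v, index v tau0 < n -> p0 v = p v by apply: (H _ v (ltnSn _)).
elim=> // n IH {}v vn.
case: (eqVneq v s) => [->|vs]; first by rewrite p_s /p0 (@par_s _ e _ _ vo0 hd0).
have := t_char0 (p0 v) v; rewrite vs eqxx /= t_charS vs /=.
case/orP=> [/eqP //|/andP[ws /eqP vE]].
have [lt _] := p0_lt vs.
have := IH (p0 v) (leq_trans lt vn); rewrite -vE => E.
have [lt' _] := p0_lt ws; rewrite E in lt'; lia.
Qed.

Definition anc x y := exists k, iter k p y = x.

Lemma anc_refl x : anc x x.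
Proof. by exists 0. Qed.

Lemma anc_par x : anc (p x) x.
Proof. by exists 1. Qed.

Lemma anc_trans x y z : anc x y -> anc y z -> anc x z.
Proof. by move=> [k <-] [l <-]; exists (k + l); rewrite iterD. Qed.

Lemma anc_total a b y : anc a y -> anc b y -> anc a b \/ anc b a.
Proof.
move=> [k <-] [l <-]; case: (leqP k l) => kl.
  by right; exists (l - k); rewrite -iterD subnK.
by left; exists (k - l); rewrite -iterD subnK // ltnW.
Qed.

Lemma iter_p_s k : iter k p s = s.
Proof. by elim: k => //= k ->; rewrite p_s. Qed.

Section Gen.
Variable rho : seq V.
Hypothesis Hr : forall y, y != s -> index (p y) rho < index y rho.

Lemma p_le y : index (p y) rho <= index y rho.
Proof. by case: (eqVneq y s) => [->|ys]; [rewrite p_s|apply: ltnW; apply: Hr]. Qed.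

Lemma anc_le x y : anc x y -> index x rho <= index y rho.
Proof.
move=> [k <-]; elim: k => // k IH; rewrite iterS.
exact: leq_trans (p_le _) IH.
Qed.

Lemma anc_lt x y : anc x y -> x != y -> index x rho < index y rho.
Proof.
move=> [[|k] <-]; first by rewrite eqxx.
rewrite iterSr => ne.
case: (eqVneq y s) => [ys|ys].
  by move: ne; rewrite ys p_s iter_p_s eqxx.
apply: leq_trans (Hr ys); rewrite ltnS; apply: anc_le; by exists k.
Qed.

Lemma chain_cross i a w : anc a w -> index a rho < i -> i <= index w rho ->
  exists x, [/\ anc a (p x), anc x w, i <= index x rho, index (p x) rho < i & x != s].
Proof.
move=> [K aK] ai iw.
have [k [kK nk nk1]] : exists k, [/\ k < K, ~~ (index (iter k p w) rho < i) &
     index (iter k.+1 p w) rho < i].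
  by apply: (first_cross (P := fun k => index (iter k p w) rho < i)); rewrite /= ?aK // -leqNgt.
exists (iter k p w); split.
- by exists (K - k.+1); rewrite -iterS -iterD subnK.
- by exists k.
- by rewrite leqNgt.
- by rewrite -iterS.
- apply: contraNneq nk => E; move: nk1; by rewrite iterS E p_s.
Qed.

End Gen.

Lemma HS y : y != s -> index (p y) sigma < index y sigma.
Proof. by case/p_lt. Qed.

Lemma H0 y : y != s -> index (p y) tau0 < index y tau0.
Proof. by rewrite -par_eq; case/p0_lt. Qed.

Lemma anc_antisym x y : anc x y -> anc y x -> x = y.
Proof.
move=> a b; have := anc_le HS a; have := anc_le HS b => l1 l2.
have E : index x sigma = index y sigma by apply/eqP; rewrite eqn_leq l1 l2.
by rewrite -(nth_idx s voS x) E (nth_idx s voS).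
Qed.

Lemma anc_s y : anc s y.
Proof.
suff H : forall n y, index y sigma < n -> anc s y by exact: H _ _ (ltnSn _).
elim=> // n IH {}y yn; case: (eqVneq y s) => [->|ys]; first exact: anc_refl.
apply: anc_trans (anc_par y); apply: IH; exact: leq_trans (HS ys) yn.
Qed.

Lemma anc_par_child z c : anc z c -> z != c -> anc z (p c).
Proof.
move=> [[|k] <-]; first by rewrite eqxx.
by rewrite iterSr => _; exists k.
Qed.

Lemma child_on_path u w : anc u w -> u != w ->
  exists c, [/\ p c = u, c != s & anc c w].
Proof.
move=> [K E] uw.
have ex : exists k, iter k p w == u by exists K; rewrite E.
case: (ex_minnP ex) => k /eqP ku kmin.
case: k ku kmin => [|k] ku kmin; first by rewrite -ku eqxx in uw.
exists (iter k p w); split.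
- by rewrite -iterS.
- apply/eqP => cs; have : iter k p w == u by rewrite -ku iterS cs p_s.
  by move/kmin; rewrite ltnn.
- by exists k.
Qed.

Let n0 k := nth s tau0 k.
Definition act0 b a := has (fun z => e (nth s tau0 a) z && (b <= index z tau0)) (enum V).

Lemma act0_mono b b' a : act0 b' a -> b <= b' -> act0 b a.
Proof.
move=> /hasP[z zV /andP[ez bz]] bb; apply/hasP; exists z => //.
by rewrite ez (leq_trans bb bz).
Qed.

Lemma exists_act0 b : 0 < b < size tau0 -> exists a, a < b /\ act0 b a.
Proof.
move=> /andP[b0 bs]; have := econn s (n0 b) => /connectP [pth pp lp].
have [u [v [uP vP euv]]] : exists u v, [/\ index u tau0 < b, ~~ (index v tau0 < b) & e u v].
  apply: (path_cross (P := fun x => index x tau0 < b)) pp; first by rewrite /= (idx_s vo0 hd0).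
  by rewrite -lp /= /n0 (idx_nth s vo0) // ltnn.
exists (index u tau0); split=> //; apply/hasP; exists v; first by rewrite mem_enum.
by rewrite (nth_idx s vo0) euv /= leqNgt.
Qed.

Lemma step0 b : 0 < b < size tau0 -> exists m,
  [/\ m < b, act0 b m, (forall l, m < l < b -> ~~ act0 b l) & p (n0 b) = n0 m].
Proof.
move=> bb; have [m [mb am Hl]] := last_witness (exists_act0 bb).
exists m; split=> //.
have [z zV /andP[ez bz]] := hasP am.
case: lex0 => _ L.
have Hl' : forall l w, m < l < b -> b <= index w tau0 -> ~~ e (nth s tau0 l) w.
  by move=> l w lb bw; move: (Hl l lb) => /hasPn /(_ w (mem_enum _ _)); rewrite bw andbT.
have [_ E] := lex_step vo0 hd0 bb (L b (proj2 (andP bb))) mb ez bz Hl'.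
by rewrite -par_eq /p0 /n0 E.
Qed.

Lemma step_anc b a :
  (forall a, a < b -> act0 b a -> anc (n0 a) (n0 b.-1)) ->
  0 < b < size tau0 -> a < b -> act0 b a -> anc (n0 a) (n0 b).
Proof.
move=> IH bb ab aa; have [m [mb am Hl pE]] := step0 bb.
have am' : a <= m by rewrite leqNgt; apply/negP => ma; move: (Hl a); rewrite ma ab aa => /(_ isT).
have bs : b < size tau0 by case/andP: bb.
apply: (anc_trans (y := n0 m)); last by rewrite -pE; exact: anc_par.
case: (anc_total (IH a ab aa) (IH m mb am)) => // H.
have := anc_le H0 H; rewrite /n0 !(idx_nth s vo0) ?(ltn_trans _ bs) // => ma.
have -> : a = m by apply/eqP; rewrite eqn_leq am' ma.
exact: anc_refl.
Qed.

Lemma claim b : b < size tau0 -> forall a, a < b.+1 -> act0 b.+1 a -> anc (n0 a) (n0 b).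
Proof.
elim: b => [|b IH] bs a ab aa.
  have -> : a = 0 by lia.
  exact: anc_refl.
case: (eqVneq a b.+1) => [->|ne]; first exact: anc_refl.
have ab' : a < b.+1 by lia.
apply: step_anc => //.
- by move=> a' a'b a'a /=; apply: IH => //; lia.
- exact: act0_mono aa _.
Qed.

Lemma norm x y : e x y -> anc x y \/ anc y x.
Proof.
wlog lt : x y / index x tau0 < index y tau0.
  move=> W exy; case: (ltngtP (index x tau0) (index y tau0)) => h.
  - exact: W.
  - by rewrite esym in exy; case: (W _ _ h exy) => H; [right|left].
  - have E : x = y by rewrite -(nth_idx s vo0 x) h (nth_idx s vo0).
    by rewrite E eirr in exy.
move=> exy.
have ys : index y tau0 < size tau0 by exact: (idx_lt vo0).
have aa : act0 (index y tau0) (index x tau0).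
  apply/hasP; exists y; first by rewrite mem_enum.
  by rewrite (nth_idx s vo0) exy leqnn.
left; have := step_anc _ _ lt aa.
rewrite /n0 !(nth_idx s vo0); apply.
- move=> a ab.
  case E: (index y tau0) ab => [//|b] ab.
  by apply: claim => //; rewrite -E ltnW.
- by rewrite ys (leq_ltn_trans _ lt).
Qed.

Definition cmpA u x y := exists v, [/\ anc v u, e v x, ~~ e v y &
  forall v', anc v' u -> anc v v' -> v != v' -> e v' x = e v' y].

Section Gen2.
Variable rho : seq V.
Hypothesis vo : vertex_order rho.
Hypothesis Hr : forall y, y != s -> index (p y) rho < index y rho.

Lemma witn_cmpA i u x y :
  i <= size rho ->
  (forall v, anc v u -> index v rho < i) ->
  (forall k, k < i -> e (nth s rho k) x -> anc (nth s rho k) u) ->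
  (forall k, k < i -> e (nth s rho k) y -> anc (nth s rho k) u) ->
  witn (fun j => e (nth s rho j) x) (fun j => e (nth s rho j) y) i <-> cmpA u x y.
Proof.
move=> isz Hu Hx Hy; split.
  case=> k [ki Pk Qk Hl]; exists (nth s rho k); split=> //; first exact: Hx.
  move=> v' av' avv' ne.
  have kv : index (nth s rho k) rho = k by rewrite (idx_nth s vo) // (leq_trans ki isz).
  have := anc_lt Hr avv' ne; rewrite kv => kl.
  by rewrite -(nth_idx s vo v'); apply: Hl; rewrite kl Hu.
case=> v [av ex ey H]; exists (index v rho); rewrite (nth_idx s vo); split=> //.
  exact: Hu.
move=> l /andP[kl li].
have lsz : l < size rho by apply: leq_trans li isz.
set w := nth s rho l.
have wl : index w rho = l by rewrite (idx_nth s vo).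
have key : anc w u -> e w x = e w y.
  move=> awu; case: (anc_total av awu) => H1.
    apply: H => //; apply: contraTneq kl => ->; by rewrite wl ltnn.
  have := anc_le Hr H1; rewrite wl; lia.
case Ex: (e w x); case Ey: (e w y) => //.
- by have := key (Hx l li Ex); rewrite Ex Ey.
- by have := key (Hy l li Ey); rewrite Ex Ey.
Qed.

Lemma nbr_anc i u c x k : p c = u -> c != s -> anc c x -> i <= index c rho ->
  k < i -> k < size rho -> e (nth s rho k) x -> anc (nth s rho k) u.
Proof.
move=> pc cs acx ic ki ks ez.
have zk : index (nth s rho k) rho = k by rewrite (idx_nth s vo).
case: (norm ez) => H.
  case: (anc_total H acx) => H1.
    rewrite -pc; apply: anc_par_child => //.
    by apply: contraTneq ic => E; rewrite -E zk -ltnNge.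
  have := anc_le Hr H1; rewrite zk; lia.
have := anc_le Hr H; have := anc_le Hr acx; rewrite zk; lia.
Qed.

End Gen2.

Lemma anc_eq_s c : anc c s -> c = s.
Proof. by move=> H; apply: anc_antisym H (anc_s c). Qed.

Lemma F3 i u c w : p c = u -> c != s -> anc c w -> i <= index c sigma ->
  index u sigma < i -> i <= size sigma ->
  lex_le (lab e s sigma i w) (lab e s sigma i c).
Proof.
move=> pc cs acw ic ui isz.
case: (eqVneq w c) => [->|wc]; first exact: lex_le_refl.
have ws : w != s by apply: contra_neq cs => E; apply: anc_eq_s; rewrite -E.
have iw : i <= index w sigma by apply: leq_trans ic (anc_le HS acw).
set b := index c tau0.
have bsz : b < size tau0 by exact: (idx_lt vo0).
have cb : nth s tau0 b = c by rewrite (nth_idx s vo0).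
case: lex0 => _ L.
have := L b bsz w; rewrite (in_drop_rho vo0) (anc_le H0 acw) cb => /(_ isT) N0.
have : lex_le (lab e s tau0 b w) (lab e s tau0 b c) := N0.
rewrite !lab_labl // lex_labl => N1.
have Hu0 : forall v, anc v u -> index v tau0 < b.
  move=> v av; apply: leq_ltn_trans (anc_le H0 av) _; rewrite -pc; exact: H0.
have N2 : ~ cmpA u w c.
  move=> C; apply: N1; apply/(witn_cmpA vo0 H0 (ltnW bsz) Hu0) => //.
  - move=> k kb; apply: (nbr_anc vo0 H0 pc cs acw (leqnn b) kb (ltn_trans kb bsz)).
  - move=> k kb; apply: (nbr_anc vo0 H0 pc cs (anc_refl c) (leqnn b) kb (ltn_trans kb bsz)).
rewrite lex_labl => W; apply: N2; apply/(witn_cmpA voS HS isz _ _ _) => //.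
- move=> v av; apply: leq_ltn_trans (anc_le HS av) ui.
- move=> k ki; apply: (nbr_anc voS HS pc cs acw ic ki (leq_trans ki isz)).
- move=> k ki; apply: (nbr_anc voS HS pc cs (anc_refl c) ic ki (leq_trans ki isz)).
Qed.

Variable bfs : seq V.
Hypothesis bfsH : bfs_order t s bfs.

Lemma vob : vertex_order bfs.
Proof. by case: bfsH. Qed.

Lemma hdb : head s bfs = s.
Proof. by case: bfsH. Qed.

Lemma bfs_par i : 0 < i < size bfs -> exists j, j < i /\ t (nth s bfs j) (nth s bfs i).
Proof. by case: bfsH => _ _ H /H /= [jl tj]; eexists; split; [exact: jl|exact: tj]. Qed.

Lemma Hb y : y != s -> index (p y) bfs < index y bfs.
Proof.
suff H : forall n y, index y bfs < n -> y != s -> index (p y) bfs < index y bfs.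
  exact: H _ _ (ltnSn _).
elim=> // n IH {}y yn ys.
set i := index y bfs.
have i0 : 0 < i by rewrite lt0n; apply: contra ys => /eqP /(idx_eq0 vob hdb) ->.
have isz : i < size bfs by exact: (idx_lt vob).
have [j [ji tj]] : exists j, j < i /\ t (nth s bfs j) (nth s bfs i) by apply: bfs_par; rewrite i0 isz.
move: tj; rewrite /i (nth_idx s vob) t_charS ys /=.
case/orP=> [/eqP <-|/andP[js /eqP yE]]; first by rewrite (idx_nth s vob) // (ltn_trans ji).
have jl : index (nth s bfs j) bfs = j by rewrite (idx_nth s vob) // (ltn_trans ji).
have := IH (nth s bfs j); rewrite jl -yE => /(_ (leq_trans ji yn) js); rewrite -/i.
lia.
Qed.

Lemma SS_child u c v : p c = u -> c != s ->
  (e v c && (index v bfs < index c bfs)) <-> (anc v u /\ e v c).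
Proof.
move=> pc cs; split.
  case/andP=> evc lt; split=> //.
  case: (norm evc) => H.
    rewrite -pc; apply: anc_par_child => //; apply: contraTneq evc => ->; by rewrite eirr.
  have := anc_le Hb H; lia.
case=> avu evc; rewrite evc /=; apply: leq_ltn_trans (anc_le Hb avu) _.
rewrite -pc; exact: Hb.
Qed.

Lemma rS_child u c c' : p c = u -> c != s -> p c' = u -> c' != s ->
  index c' sigma <= index c sigma ->
  rS e (rev sigma) bfs c' c <-> ~ cmpA u c c'.
Proof.
move=> pc cs pc' cs' le.
rewrite /rS /= revK le andbT ltsig_not.
have ub : uniq bfs by case/andP: vob.
have mb z : z \in bfs by exact: (mem_rho vob).
have E : ltsig [seq (fun v => pred_of_simpl [pred w | e v w & index w (rev bfs) < index v (rev bfs)]) i | i <- rev bfs] c c' <-> cmpA u c c'.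
  split.
    case/ltsig_map => v [vin /= Fc Fc' H].
    rewrite index_rev_lt // in Fc; rewrite index_rev_lt // in Fc'.
    have [avu evc] := (SS_child v pc cs).1 Fc.
    exists v; split=> //.
      apply: contra Fc' => evc'; exact: (SS_child v pc' cs').2 (conj avu evc').
    move=> v' av' avv' ne.
    have := H v'; rewrite mem_rev mb /= !index_rev_lt // => /(_ isT).
    have lt : index v bfs < index v' bfs by apply: (anc_lt Hb avv' ne) || apply: (anc_lt _ Hb avv' ne).
    rewrite !lt => /(_ isT).
    move=> E'; case Ec: (e v' c); case Ec': (e v' c') => //.
    - move: E'; rewrite Ec Ec' /= => /negbT/negP N; exfalso; apply: N.
      apply: leq_ltn_trans (anc_le Hb av') _; rewrite -pc; exact: Hb.
    - move: E'; rewrite Ec Ec' /= => E2.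
      have : index v' bfs < index c' bfs.
        apply: leq_ltn_trans (anc_le Hb av') _; rewrite -pc'; exact: Hb.
      by rewrite -E2.
  case=> v [avu evc nevc' H]; apply/ltsig_map; exists v; split.
  - by rewrite mem_rev.
  - by rewrite /= index_rev_lt //; apply/(SS_child v pc cs).
  - by rewrite /= index_rev_lt // negb_and nevc'.
  move=> v'; rewrite mem_rev /= !index_rev_lt // => _ lt.
  case Ec: (e v' c && (index v' bfs < index c bfs)); case Ec': (e v' c' && (index v' bfs < index c' bfs)) => //.
  - have [av' e1] := (SS_child v' pc cs).1 Ec.
    case: (anc_total avu av') => H1.
      have ne : v != v' by apply/eqP => E0; move: lt; rewrite E0 ltnn.
      have e2 := H v' av' H1 ne.
      move: Ec'; rewrite -e2 e1 /= => E3.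
      have : index v' bfs < index c' bfs.
        apply: leq_ltn_trans (anc_le Hb av') _; rewrite -pc'; exact: Hb.
      by rewrite E3.
    have := anc_le Hb H1; lia.
  - have [av' e1] := (SS_child v' pc' cs').1 Ec'.
    case: (anc_total avu av') => H1.
      have ne : v != v' by apply/eqP => E0; move: lt; rewrite E0 ltnn.
      have e2 := H v' av' H1 ne.
      move: Ec; rewrite e2 e1 /= => E3.
      have : index v' bfs < index c bfs.
        apply: leq_ltn_trans (anc_le Hb av') _; rewrite -pc; exact: Hb.
      by rewrite E3.
    have := anc_le Hb H1; lia.
split=> [H C|H]; first by move/E: C; apply/negP.
by apply/negP => /E.
Qed.

Definition tact i a := has (fun w => t (nth s sigma a) w && (w \notin take i sigma)) (enum V).

Lemma idxS k : k < size sigma -> index (nth s sigma k) sigma = k.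
Proof. exact: (idx_nth s voS). Qed.

Lemma nthS v : nth s sigma (index v sigma) = v.
Proof. exact: (nth_idx s voS). Qed.

Lemma szS v : index v sigma < size sigma.
Proof. exact: (idx_lt voS). Qed.

Lemma ns_s i : i < size sigma -> 0 < i -> nth s sigma i != s.
Proof.
move=> isz i0; apply/eqP => E; have := idxS isz; rewrite E (idx_s voS hdS) => E0.
by rewrite -E0 in i0.
Qed.

Lemma w_s i w : 0 < i -> i <= index w sigma -> w != s.
Proof. by move=> i0 iw; apply/eqP => E; move: iw; rewrite E (idx_s voS hdS); case: i i0. Qed.

Lemma no_nbr i j : j < i -> (forall k, j < k < i -> ~~ tact i k) ->
  forall l w, j < l < i -> i <= index w sigma -> ~~ e (nth s sigma l) w.
Proof.
move=> ji nt l w /andP[jl li] iw; apply/negP => E.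
have lsz : l < size sigma by apply: ltn_trans li (leq_ltn_trans iw (szS w)).
case: (norm E) => H.
  have [x [a1 a2 a3 a4 a5]] := chain_cross (rho := sigma) (i := i) H ltac:(by rewrite idxS) iw.
  have := nt (index (p x) sigma); rewrite a4 andbT.
  have := anc_le HS a1; rewrite idxS // => lpx.
  rewrite (leq_trans jl lpx) => /(_ isT) /hasPn /(_ x (mem_enum _ _)).
  by rewrite nthS t_charS a5 eqxx /= (in_take_rho voS) -leqNgt a3.
have := anc_le HS H; rewrite idxS //; lia.
Qed.

Lemma exists_tact i : 0 < i < size sigma -> exists a, a < i /\ tact i a.
Proof.
move=> /andP[i0 isz].
have [x [a1 a2 a3 a4 a5]] := chain_cross (rho := sigma) (i := i) (anc_s (nth s sigma i))
   ltac:(by rewrite (idx_s voS hdS)) ltac:(by rewrite idxS).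
exists (index (p x) sigma); split=> //; apply/hasP; exists x; first exact: mem_enum.
by rewrite nthS t_charS a5 eqxx /= (in_take_rho voS) -leqNgt a3.
Qed.

Lemma tchild i j w : j < i -> t (nth s sigma j) w -> i <= index w sigma ->
  w != s /\ p w = nth s sigma j.
Proof.
move=> ji; rewrite t_charS; case/orP=> [/andP[ws /eqP ->]//|/andP[js /eqP E]] iw.
have jsz : j < size sigma by apply: ltn_trans ji (leq_ltn_trans iw (szS w)).
have := HS js; rewrite -E idxS //; lia.
Qed.

Let tau := ordering_tau e s (rev sigma) bfs.

Lemma child_cmp i j c c' : j < i -> i < size sigma ->
  p c = nth s sigma j -> c != s -> i <= index c sigma ->
  p c' = nth s sigma j -> c' != s -> index c' sigma = i ->
  (index c tau <= index c' tau) <-> lex_le (lab e s sigma i c) (lab e s sigma i c').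
Proof.
move=> ji isz pc cs ic pc' cs' ic'.
case: (eqVneq c c') => [->|ne]; first by rewrite leqnn lex_le_refl.
rewrite /tau tau_cmp //; last by move=> v; rewrite mem_rev (mem_rho voS).
rewrite (rS_child pc cs pc' cs'); last by rewrite ic'.
rewrite !lab_labl // lex_labl.
have jsz : j < size sigma by apply: ltn_trans ji isz.
have E := witn_cmpA voS HS (i := i) (u := nth s sigma j) (x := c) (y := c') (ltnW isz).
rewrite E //.
- move=> v av; apply: leq_ltn_trans (anc_le HS av) _; by rewrite idxS.
- move=> k ki; apply: (nbr_anc voS HS pc cs (anc_refl c) ic ki (ltn_trans ki isz)).
- move=> k ki; apply: (nbr_anc voS HS pc' cs' (anc_refl c') _ ki (ltn_trans ki isz)).
  by rewrite ic'.
Qed.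

Definition Dstep x0 i := exists2 j, j < i &
  [/\ has (fun w => t (nth x0 sigma j) w && (w \notin take i sigma)) (enum V),
      forall k, j < k < i -> ~~ has (fun w => t (nth x0 sigma k) w && (w \notin take i sigma)) (enum V),
      t (nth x0 sigma j) (nth x0 sigma i) && (nth x0 sigma i \notin take i sigma) &
      forall w, t (nth x0 sigma j) w && (w \notin take i sigma) ->
        index w tau <= index (nth x0 sigma i) tau].

Definition Lstep i := forall w, w \in drop i sigma ->
  lex_le (lab e s sigma i w) (lab e s sigma i (nth s sigma i)).

Lemma L_to_D x0 i : 0 < i < size sigma -> Lstep i -> Dstep x0 i.
Proof.
move=> ii L; have /andP[i0 isz] := ii.
have nx k : k < size sigma -> nth x0 sigma k = nth s sigma k.
  by move=> ks; apply: set_nth_default.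
have [j [ji tj nt]] := last_witness (P := tact i) (exists_tact ii).
have jsz : j < size sigma by apply: ltn_trans ji isz.
exists j => //; rewrite !nx //.
have [z zV /andP[tz zt]] := hasP tj.
have iz : i <= index z sigma by rewrite (in_take_rho voS) -leqNgt in zt.
have [zs pz] := tchild ji tz iz.
have ez : e (nth s sigma j) z by rewrite -pz; case: (p_lt zs).
have [_ pE0] := lex_step voS hdS ii L ji ez iz (no_nbr ji nt).
have pE : p (nth s sigma i) = nth s sigma j := pE0.
have ins := ns_s isz i0.
split=> //.
- by move=> k kk; rewrite nx; [exact: nt | lia].
- by rewrite t_charS ins pE eqxx /= (in_take_rho voS) idxS // ltnn.
- move=> w /andP[tw wt].
  have iw : i <= index w sigma by rewrite (in_take_rho voS) -leqNgt in wt.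
  have [ws pw] := tchild ji tw iw.
  apply/(child_cmp ji isz pw ws iw pE ins); first by rewrite idxS.
  by apply: L; rewrite (in_drop_rho voS).
Qed.

Lemma D_to_L x0 i : 0 < i < size sigma -> Dstep x0 i -> Lstep i.
Proof.
move=> ii [j ji [tj nt uij Hw]]; have /andP[i0 isz] := ii.
have nx k : k < size sigma -> nth x0 sigma k = nth s sigma k.
  by move=> ks; apply: set_nth_default.
have jsz : j < size sigma by apply: ltn_trans ji isz.
rewrite !nx // in tj uij Hw.
have nt' : forall k, j < k < i -> ~~ tact i k.
  by move=> k kk; have := nt k kk; rewrite nx //; lia.
have ins := ns_s isz i0.
have ii' : i <= index (nth s sigma i) sigma by rewrite idxS.
case/andP: uij => tji _.
have [_ pE] := tchild ji tji ii'.
move=> w; rewrite (in_drop_rho voS) => iw.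
have ws := w_s i0 iw.
rewrite !lab_labl // lex_labl => [[k [ki Pk Qk Hl]]].
case: (ltngtP k j) => kj.
- have := Hl j; rewrite kj ji => /(_ isT) euw.
  have eu : e (nth s sigma j) (nth s sigma i) by rewrite -pE; case: (p_lt ins).
  rewrite eu in euw.
  case: (norm euw) => H; last first.
    have := anc_le HS H; rewrite idxS //; lia.
  have uw : nth s sigma j != w by apply: contraTneq iw => <-; rewrite idxS // -ltnNge.
  have [c [pc cs acw]] := child_on_path H uw.
  have jc : j < index c sigma by rewrite -(idxS jsz) -pc; exact: HS.
  have ic : i <= index c sigma.
    rewrite leqNgt; apply/negP => ci.
    have [x [a1 a2 a3 a4 a5]] := chain_cross (rho := sigma) (i := i) acw ci iw.
    have := nt' (index (p x) sigma); rewrite a4 andbT.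
    have := anc_le HS a1 => cpx.
    rewrite (leq_ltn_trans _ (leq_trans jc cpx)) // => /(_ isT) /hasPn /(_ x (mem_enum _ _)).
    by rewrite nthS t_charS a5 eqxx /= (in_take_rho voS) -leqNgt a3.
  have tc : t (nth s sigma j) c && (c \notin take i sigma).
    by rewrite t_charS cs pc eqxx /= (in_take_rho voS) -leqNgt ic.
  have L1 := (child_cmp ji isz pc cs ic pE ins (idxS isz)).1 (Hw c tc).
  have L2 := F3 pc cs acw ic ltac:(by rewrite idxS) (ltnW isz).
  have := lex_le_trans L2 L1; rewrite !lab_labl // lex_labl; apply.
  by exists k.
- by have := no_nbr ji nt' (l := k) (w := w); rewrite kj ki iw Pk => /(_ isT isT).
- by move: Qk; rewrite kj -pE; case: (p_lt ins) => _ ->.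
Qed.

End Main.

Unset Implicit Arguments.

Theorem lemma11 (V : finType) (e : rel V) (t : rel V) (s : V) (sigma : seq V) :
  simple_graph e ->
  connected_graph e ->
  is_lexdfs_ltree e t s ->
  vertex_order sigma ->
  head s sigma = s ->
  ltree_of e sigma t ->
  forall bfs : seq V, bfs_order t s bfs ->
    (ordering_outputs e t s (rev sigma) bfs sigma <-> lexdfs_order e s sigma).
Proof.
move=> [es ei] conn [tau0 [lx0 l0]] vo hd lt bfs bH.
have L0 : forall w, w \in drop 0 sigma ->
    lex_le (lexdfs_label e s sigma 0 w) (lexdfs_label e s sigma 0 (nth s sigma 0)).
  move=> w _; have -> : nth s sigma 0 = s by rewrite -hd; case: (sigma) => //.
  rewrite /lexdfs_label /= eqxx; case: (w == s) => //=.
split.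
  case=> x0 [_ _ D]; split=> // i isz.
  case: i isz => [|i] isz; first exact: L0.
  exact: (D_to_L es ei conn vo hd lt lx0 l0 bH (x0 := x0) (i := i.+1) isz (D i.+1 isz)).
case=> _ L; exists s; split=> //.
  by rewrite /ordering_tau rev_cons last_rcons hd.
move=> i ii.
exact: (L_to_D es ei conn vo hd lt lx0 l0 bH s ii (L i (proj2 (andP ii)))).
Qed.
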